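(* Let $S$ be a $\mathbb{Q}$-algebra, $\varphi: S\to R$ a ring morphism, $W\in S$, $(X,d_X)$ a finite rank matrix factorisation of $W$ over $R$ with a fixed homogeneous $R$-basis $\{\xi_i\}$, and $\mathbf{t}=\{t_1,\ldots,t_n\}$ a quasi-regular sequence in $R$ with $R/\mathbf{t}R$ finitely generated projective over $S$, with odd $R$-linear $\lambda_j$ on $X$ such that $\lambda_j d_X + d_X\lambda_j = t_j\cdot 1_X$. Suppose $R$ has a standard flat $S$-linear connection $\nabla^0(r)=\sum_j \partial_j(r)\otimes \mathrm{d}t_j$ as an $S[\mathbf{t}]$-module, and define $S$-linear maps $\partial_j$ on $X$ by $\partial_j(r\xi_i) = \partial_j(r)\xi_i$. Then the idempotent $e = \vartheta\circ\psi$ on $X/\mathbf{t}X$ (for which $\psi\circ\vartheta = 1$, $\psi: X/\mathbf{t}X\to\varphi_*(X)[n]$, $\vartheta:\varphi_*(X)[n]\to X/\mathbf{t}X$ in $\mathrm{hf}(S,W)$, and $e = \frac{1}{n!}(-1)^{\binom{n+1}{2}}\lambda_1\cdots\lambda_n\,\mathrm{At}_{S[\mathbf{t}]/S}(X)^n$) is, as an $S$-linear endomorphism of $X/\mathbf{t}X$, \[ e = \frac{1}{n!}(-1)^{\binom{n}{2}} \sum_{\tau\in S_n} \mathrm{sgn}(\tau)\, \lambda_1\cdots\lambda_n\, [\partial_{\tau(1)}, d_X]\cdots[\partial_{\tau(n)},d_X]. \]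
   Context: All rings commutative. A linear factorisation of $W$ over $R$ is a $\mathbb{Z}/2$-graded $R$-module $X$ with an odd $R$-linear $d_X$, $d_X^2=W\cdot 1_X$; a finite rank matrix factorisation has $X^0,X^1$ free of finite rank. $\mathrm{hf}(S,W)$ is the homotopy category of linear factorisations of $W$ over $S$; $X[n]$ is the $n$-fold suspension (grading shifted, differential multiplied by $(-1)^n$); $\varphi_*$ is restriction of scalars; $X/\mathbf{t}X = X\otimes_R R/\mathbf{t}R$. $S[\mathbf{t}]$ is the polynomial ring in formal variables $t_i$, and $R$ an $S[\mathbf{t}]$-algebra. The connection $\nabla^0: R\to R\otimes_{S[\mathbf{t}]}\Omega^1_{S[\mathbf{t}]/S}$ is $S$-linear with the Leibniz rule; flat means the $\partial_j$ commute; standard means flat and, for each integer $p>0$, $r\mapsto pr+\sum_j t_j\partial_j(r)$ is a bijection of $R$ mapping $\mathbf{t}R$ onto $\mathbf{t}R$, and the image of $r\mapsto\sum_jt_j\partial_j(r)$ is $\mathbf{t}R$. The commutators $[\partial_j,d_X]$ are $S[\mathbf{t}]$-linear odd maps on $X$ (here $d_X$ acts via its matrix in the basis), so induce $S$-linear maps on $X/\mathbf{t}X$. The Atiyah class $\mathrm{At}_{S[\mathbf{t}]/S}(X) = [d_X,\nabla_X]$ with $\nabla_X(r\xi_i) = \xi_i\otimes\nabla^0(r)$, iterated $n$ times and trivialising $\Omega^n_{S[\mathbf{t}]/S}$ by $\mathrm{d}t_1\wedge\cdots\wedge\mathrm{d}t_n$, is a degree $n$ $S[\mathbf{t}]$-linear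 endomorphism of $X$. *)

(* Defs.v *)
From HB Require Import structures.
From mathcomp Require Import all_boot all_order all_algebra all_fingroup.
From mathcomp Require Import mpoly.
Set Implicit Arguments. Unset Strict Implicit. Unset Printing Implicit Defensive.
Import Order.TTheory GRing.Theory.
Local Open Scope ring_scope.

Definition in_tR (R : comNzRingType) (n : nat) (t : 'I_n -> R) (r : R) : Prop :=
  exists a : 'I_n -> R, r = \sum_(j < n) t j * a j.

(* x \in tX, for X = R^m (column vectors in the fixed basis xi_i) *)
Definition in_tX (R : comNzRingType) (n m : nat) (t : 'I_n -> R)
    (x : 'cV[R]_m) : Prop :=
  exists y : 'I_n -> 'cV[R]_m, x = \sum_(j < n) t j *: y j.

(* r \in (tR)^k : the k-th power of the ideal tR is the R-span of the
   monomials of degree k in the t_j, i.e. the values at t of the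
   homogeneous polynomials of degree k over R. *)
Definition in_tR_pow (R : comNzRingType) (n : nat) (t : 'I_n -> R) (k : nat)
    (r : R) : Prop :=
  exists G : {mpoly R[n]}, G \is k.-homog /\ r = G.@[t].

(* Quasi-regular sequence (Matsumura): the canonical surjection
   (R/I)[x_1..x_n] -> gr_I(R) is injective, i.e. whenever a homogeneous
   polynomial F of degree k over R satisfies F(t) \in I^(k+1), all the
   coefficients of F lie in I = tR. *)
Definition quasi_regular (R : comNzRingType) (n : nat) (t : 'I_n -> R) : Prop :=
  forall (k : nat) (F : {mpoly R[n]}), F \is k.-homog ->
    in_tR_pow t k.+1 F.@[t] -> forall mon, in_tR t (F@_mon).

(* R/tR is a finitely generated projective S-module (S acting through phi):
   R/tR is a retract (direct summand) of a finite free module S^k. *)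
Definition quot_fg_projective (S R : comNzRingType) (phi : {rmorphism S -> R})
    (n : nat) (t : 'I_n -> R) : Prop :=
  exists (k : nat) (a : R -> 'rV[S]_k) (b : 'rV[S]_k -> R),
    [/\ (forall r r', a (r + r') = a r + a r'),
        (forall s r, a (phi s * r) = s *: a r),
        (forall r, in_tR t r -> a r = 0) &
        [/\ (forall v v', b (v + v') = b v + b v'),
         (forall s v, b (s *: v) = phi s * b v) &
         (forall r, in_tR t (b (a r) - r))]].

Definition Q_algebra (S : unitRingType) : Prop :=
  forall k : nat, (k.+1)%:R \is a @GRing.unit S.

Definition is_connection (S R : comNzRingType) (phi : {rmorphism S -> R})
    (n : nat) (t : 'I_n -> R) (del : 'I_n -> R -> R) : Prop :=
  (forall j r r', del j (r + r') = del j r + del j r') /\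
  (forall j s r, del j (phi s * r) = phi s * del j r) /\
  (forall j (P : {mpoly S[n]}) r,
      del j (mmap phi t P * r) = mmap phi t P * del j r + mmap phi t (mderiv j P) * r).

Definition is_flat (R : Type) (n : nat) (del : 'I_n -> R -> R) : Prop :=
  forall j k r, del j (del k r) = del k (del j r).

Definition is_standard (R : comNzRingType) (n : nat) (t : 'I_n -> R)
    (del : 'I_n -> R -> R) : Prop :=
  is_flat del /\
  (forall p : nat, (0 < p)%N ->
     let f := fun r : R => p%:R * r + \sum_(j < n) t j * del j r in
     bijective f /\
     (forall r, in_tR t r -> in_tR t (f r)) /\
     (forall y, in_tR t y -> exists2 r, in_tR t r & f r = y)) /\
  (forall y, in_tR t y <-> exists r, \sum_(j < n) t j * del j r = y).

(* Matrix factorisations: X = R^m with homogeneous basis xi_i, the     *)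
(* parity of xi_i being par i.                                         *)

Definition is_odd_mx (R : nzRingType) (m : nat) (par : 'I_m -> bool)
    (A : 'M[R]_m) : Prop :=
  forall i k, par i = par k -> A i k = 0.

Definition delX (R : Type) (n m : nat) (del : 'I_n -> R -> R) (j : 'I_n)
    (x : 'cV[R]_m) : 'cV[R]_m := map_mx (del j) x.

Definition comm_del_d (R : comNzRingType) (n m : nat) (del : 'I_n -> R -> R)
    (D : 'M[R]_m) (j : 'I_n) (x : 'cV[R]_m) : 'cV[R]_m :=
  delX del j (D *m x) - D *m delX del j x.

(* X (x)_R Omega^*_{S[t]/S}: Omega^* is the exterior algebra over R on *)
(* dt_1..dt_n (placed in even degree); an element is the family of its *)
(* coefficients along dt_I = dt_{i1} /\ ... /\ dt_{ik}, i1 < ... < ik.  *)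

Definition XOm (R : Type) (n m : nat) := {ffun {set 'I_n} -> 'cV[R]_m}.

(* dt_J /\ dt_I = (-1)^{#inversions} dt_{J u I}  (J, I disjoint) *)
Definition wsign (R : nzRingType) (n : nat) (J I : {set 'I_n}) : R :=
  (-1) ^+ #|[set ab in setX J I | (ab.2 < ab.1)%N]|.

Definition tensor_basis (R : nzRingType) (n m : nat) (x : 'cV[R]_m)
    (I : {set 'I_n}) : XOm R n m :=
  [ffun K => if K == I then x else 0].

Definition wedge_basis (R : nzRingType) (n m : nat) (g : XOm R n m)
    (I : {set 'I_n}) : XOm R n m :=
  [ffun K => \sum_(J : {set 'I_n} | (J :&: I == set0) && (J :|: I == K))
               wsign R J I *: g J].

Definition nablaX (R : nzRingType) (n m : nat) (del : 'I_n -> R -> R)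
    (x : 'cV[R]_m) : XOm R n m :=
  \sum_(j < n) tensor_basis (delX del j x) [set j].

Definition dXOm (R : nzRingType) (n m : nat) (D : 'M[R]_m) (g : XOm R n m)
    : XOm R n m := [ffun K => D *m g K].

(* Atiyah class At(X) = [d_X, nabla_X] : X -> X (x) Omega^1
   (nabla_X even, d_X odd, so the graded commutator is d nabla - nabla d) *)
Definition Atiyah (R : nzRingType) (n m : nat) (del : 'I_n -> R -> R)
    (D : 'M[R]_m) (x : 'cV[R]_m) : XOm R n m :=
  dXOm D (nablaX del x) - nablaX del (D *m x).

Definition Atiyah_ext (R : nzRingType) (n m : nat) (del : 'I_n -> R -> R)
    (D : 'M[R]_m) (g : XOm R n m) : XOm R n m :=
  \sum_(I : {set 'I_n}) wedge_basis (Atiyah del D (g I)) I.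

(* At^n : X -> X (x) Omega^n, trivialised by dt_1 /\ ... /\ dt_n *)
Definition Atiyah_pow_top (R : nzRingType) (n m : nat) (del : 'I_n -> R -> R)
    (D : 'M[R]_m) (x : 'cV[R]_m) : 'cV[R]_m :=
  (iter n (Atiyah_ext del D) (tensor_basis x set0)) setT.

Definition idem_e (R : comUnitRingType) (n m : nat) (del : 'I_n -> R -> R)
    (D : 'M[R]_m) (lam : 'I_n -> 'M[R]_m) (x : 'cV[R]_m) : 'cV[R]_m :=
  ((n`!)%:R)^-1 * (-1) ^+ 'C(n.+1, 2) *:
     ((\prod_(j < n) lam j) *m Atiyah_pow_top del D x).

Definition idem_formula (R : comUnitRingType) (n m : nat)
    (del : 'I_n -> R -> R) (D : 'M[R]_m) (lam : 'I_n -> 'M[R]_m)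
    (x : 'cV[R]_m) : 'cV[R]_m :=
  ((n`!)%:R)^-1 * (-1) ^+ 'C(n, 2) *:
    \sum_(tau : 'S_n) (-1) ^+ (odd_perm tau) *:
       ((\prod_(j < n) lam j) *m
          foldr (fun i y => comm_del_d del D (tau i) y) x (enum 'I_n)).

(* Main.v *)
Require Import Defs.
From HB Require Import structures.
From mathcomp Require Import all_boot all_order all_algebra all_fingroup.
From mathcomp Require Import mpoly.
Import GRing.Theory.
Local Open Scope ring_scope.

Fixpoint eps (k : nat) : ('I_k -> nat) -> nat :=
  match k return ('I_k -> nat) -> nat with
  | 0 => fun _ => 0%N
  | kk.+1 => fun f : 'I_kk.+1 -> nat =>
       addn (#|[set i : 'I_kk | (f (lift ord0 i) < f ord0)%N]|)
                       (eps kk (fun i => f (lift ord0 i)))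

  end.
Arguments eps {k}.

Lemma eps_ext k (f g : 'I_k -> nat) : f =1 g -> eps f = eps g.
Proof.
elim: k f g => [|k IH] f g fg //=.
rewrite (IH _ (fun i => g (lift ord0 i))) => [|i]; last exact: fg.
congr (_ + _)%N; apply: eq_card => i; by rewrite !inE !fg.
Qed.

Lemma eps_mono k (f : 'I_k -> nat) (g : nat -> nat) :
  (forall a b, (g a < g b)%N = (a < b)%N) -> eps (fun i => g (f i)) = eps f.
Proof.
move=> gm; elim: k f => [|k IH] f //=.
rewrite (IH (fun i => f (lift ord0 i))).
congr (_ + _)%N; apply: eq_card => i; by rewrite !inE gm.
Qed.

Lemma card_lt_ord N (j : nat) : (j <= N)%N -> #|[set k : 'I_N | (k < j)%N]| = j.
Proof.
move=> hj.
rewrite (eq_card (B := [set widen_ord hj i | i : 'I_j])).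
  by rewrite card_imset ?card_ord //; by move=> a b /(congr1 val) /= /val_inj.
move=> k; rewrite !inE; apply/idP/imsetP => [kj | [i _ ->]] //=.
by exists (Ordinal kj) => //; apply: val_inj.
Qed.

Lemma lift_perm_decomp N (s : 'S_N.+1) : exists sg : 'S_N, s = lift_perm ord0 (s ord0) sg.
Proof.
pose ulsf (s : 'S_N.+1) k := odflt k (unlift (s ord0) (s (lift ord0 k))).
have ulsfK (s' : 'S_N.+1) k: lift (s' ord0) (ulsf s' k) = s' (lift ord0 k).
  rewrite /ulsf; have:= neq_lift ord0 k.
  by rewrite -(can_eq (permK s')) => /unlift_some[] ? ? ->.
have inj_ulsf: injective (ulsf s).
  move=> a b eab; apply: (@lift_inj _ ord0); apply: (@perm_inj _ s).
  by rewrite -!ulsfK eab.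
exists (perm inj_ulsf); apply/permP=> k.
case: (unliftP ord0 k) => [kk|] ->; rewrite ?lift_perm_id //.
by rewrite lift_perm_lift permE ulsfK.
Qed.

Lemma lift_lt (N : nat) (j : 'I_N.+1) (k : 'I_N) : (lift j k < j)%N = (k < j)%N.
Proof.
rewrite /= /bump; case: (leqP j k) => h /=.
  rewrite add1n; apply/negbTE; rewrite -leqNgt; exact: leq_trans h (leqnSn _).
by rewrite add0n h.
Qed.

Lemma eps_perm N (s : 'S_N) : odd (eps (fun i => s i)) = odd_perm s.
Proof.
elim: N s => [|N IH] s.
  have -> : s = 1%g by apply/permP => -[].
  by rewrite odd_perm1.
have [sg hs] := @lift_perm_decomp N s.
rewrite hs; set j := s ord0.
rewrite /= lift_perm_id.
rewrite (eq_card (B := [pred i : 'I_N | (sg i < j)%N])); last first.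
  by move=> i; rewrite !inE lift_perm_lift lift_lt.
rewrite (@eps_ext _ _ (fun i => bump j (sg i))); last first.
  by move=> i; rewrite lift_perm_lift.
rewrite eps_mono; last by move=> a b; rewrite !ltnNge leq_bump2.
rewrite (eq_card (B := sg @^-1: [set k : 'I_N | (k < j)%N])); last by move=> i; rewrite !inE.
rewrite card_preimset; last exact: perm_inj.
rewrite card_lt_ord; last by rewrite -ltnS.
by rewrite oddD IH odd_lift_perm.
Qed.

Section Alg.
Variables (R : comUnitRingType) (n m : nat) (del : 'I_n -> R -> R) (D : 'M[R]_m).
Hypothesis del_add : forall j r r', del j (r + r') = del j r + del j r'.

Definition cA j (y : 'cV[R]_m) : 'cV[R]_m := D *m delX del j y - delX del j (D *m y).

Lemma delX_add j (y z : 'cV[R]_m) : delX del j (y + z) = delX del j y + delX del j z.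
Proof. by apply/matrixP => a b; rewrite !mxE del_add. Qed.

Lemma cA_add j (y z : 'cV[R]_m) : cA j (y + z) = cA j y + cA j z.
Proof. by rewrite /cA delX_add mulmxDr mulmxDr delX_add opprD addrACA. Qed.

Lemma cA0 j : cA j 0 = 0.
Proof.
have h := cA_add j 0 0; rewrite addr0 in h.
by apply: (@addrI _ (cA j 0)); rewrite addr0 -h.
Qed.

Lemma cA_N j (y : 'cV[R]_m) : cA j (- y) = - cA j y.
Proof.
have h := cA_add j y (- y); rewrite subrr cA0 in h.
by apply/eqP; rewrite -addr_eq0 addrC -h.
Qed.

Lemma cA_sign j e (y : 'cV[R]_m) : cA j ((-1) ^+ e *: y) = (-1) ^+ e *: cA j y.
Proof.
elim: e => [|e IH]; first by rewrite !scale1r.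
by rewrite exprS mulN1r !scaleNr cA_N IH.
Qed.

Lemma cA_sum j (I : Type) (r : seq I) (P : pred I) (F : I -> 'cV[R]_m) :
  cA j (\sum_(i <- r | P i) F i) = \sum_(i <- r | P i) cA j (F i).
Proof. exact: (big_morph (cA j) (cA_add j) (cA0 j)). Qed.

Lemma Atiyah_val (y : 'cV[R]_m) K : Atiyah del D y K = \sum_(j < n | K == [set j]) cA j y.
Proof.
rewrite /Atiyah /dXOm /nablaX !ffunE !sum_ffunE mulmx_sumr -sumrB [RHS]big_mkcond /=.
apply: eq_bigr => j _; rewrite /tensor_basis !ffunE /cA.
by case: (K == [set j]); rewrite ?mulmx0 ?subrr.
Qed.

Lemma setj_cond (K I : {set 'I_n}) j :
  ([set j] :&: I == set0) && ([set j] :|: I == K) = (j \in K) && (I == K :\ j).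
Proof.
apply/andP/andP.
  move=> [/eqP hI /eqP hK]; subst K; split; first by rewrite setU11.
  have hjI : j \notin I.
    by apply/negP => hj; move/setP: hI => /(_ j); rewrite !inE eqxx hj.
  by rewrite setU1K.
move=> [hj /eqP ->]; split; last by rewrite setD1K.
by apply/eqP/setP => y; rewrite !inE; case: eqP => // ->; rewrite eqxx.
Qed.

Lemma Atiyah_ext_val (g : XOm R n m) K :
  Atiyah_ext del D g K = \sum_(j in K) wsign R [set j] (K :\ j) *: cA j (g (K :\ j)).
Proof.
rewrite /Atiyah_ext sum_ffunE.
have step : forall I, wedge_basis (Atiyah del D (g I)) I K =
   \sum_j (if ([set j] :&: I == set0) && ([set j] :|: I == K)
           then wsign R [set j] I *: cA j (g I) else 0).
  move=> I; rewrite /wedge_basis ffunE.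
  under eq_bigr => J _ do rewrite Atiyah_val scaler_sumr.
  rewrite big_mkcond /=.
  under eq_bigr => J _ do rewrite (fun_if (fun x => x)) big_mkcond /=.
  transitivity (\sum_J \sum_(i<n) (if ((J :&: I == set0) && (J :|: I == K)) && (J == [set i])
       then wsign R J I *: cA i (g I) else 0)).
    apply: eq_bigr => J _; case: ifP => c.
      by apply: eq_bigr => i _; rewrite andTb.
    by rewrite big1 // => i _; rewrite andFb.
  rewrite exchange_big; apply: eq_bigr => i _.
  rewrite (bigD1 [set i]) //= eqxx andbT big1 ?addr0 // => J /negbTE hJ.
  by rewrite hJ andbF.
rewrite (eq_bigr _ (fun I _ => step I)) exchange_big [RHS]big_mkcond /=.
apply: eq_bigr => j _.
under eq_bigr => I _ do rewrite setj_cond.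
case: (j \in K) => /=; last by rewrite big1.
rewrite (bigD1 (K :\ j)) //= eqxx big1 ?addr0 // => I /negbTE hI.
by rewrite hI.
Qed.



Definition Phi k (x : 'cV[R]_m) : XOm R n m := iter k (Atiyah_ext del D) (tensor_basis x set0).

Definition Cf k (f : 'I_k -> 'I_n) (x : 'cV[R]_m) : 'cV[R]_m :=
  foldr (fun i y => cA (f i) y) x (enum 'I_k).
Arguments Cf {k}.

Lemma Cf_ext k (f g : 'I_k -> 'I_n) (x : 'cV[R]_m) : f =1 g -> Cf f x = Cf g x.
Proof. by move=> fg; rewrite /Cf; elim: (enum _) => //= a s ->; rewrite fg. Qed.

Lemma Cf_S k (f : 'I_k.+1 -> 'I_n) (x : 'cV[R]_m) : Cf f x = cA (f ord0) (Cf (fun i => f (lift ord0 i)) x).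
Proof. by rewrite /Cf enum_ordSl /= foldr_map. Qed.

Definition consf k (j : 'I_n) (f : {ffun 'I_k -> 'I_n}) : {ffun 'I_k.+1 -> 'I_n} :=
  [ffun i => if unlift ord0 i is Some i' then f i' else j].
Arguments consf {k}.

Lemma consf0 k j (f : {ffun 'I_k -> 'I_n}) : consf j f ord0 = j.
Proof. by rewrite ffunE unlift_none. Qed.

Lemma consf_lift k j (f : {ffun 'I_k -> 'I_n}) i : consf j f (lift ord0 i) = f i.
Proof. by rewrite ffunE liftK. Qed.

Lemma sum_ffunS (V : zmodType) k (F : {ffun 'I_k.+1 -> 'I_n} -> V) :
  \sum_f F f = \sum_j \sum_(f : {ffun 'I_k -> 'I_n}) F (consf j f).
Proof.
rewrite pair_big /=.
rewrite (reindex (fun p : 'I_n * {ffun 'I_k -> 'I_n} => consf p.1 p.2)) //=.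
exists (fun f => (f ord0, [ffun i => f (lift ord0 i)])) => [[j f] _ | f _] /=.
  by rewrite consf0; congr (_, _); apply/ffunP => i; rewrite ffunE consf_lift.
apply/ffunP => i; rewrite ffunE; case: (unliftP ord0 i) => [i'|] ->.
  by rewrite ffunE.
by [].
Qed.

Lemma im_consf k j (f : {ffun 'I_k -> 'I_n}) :
  [set consf j f i | i : 'I_k.+1] = j |: [set f i | i : 'I_k].
Proof.
apply/setP=> y; rewrite in_setU1; apply/imsetP/predU1P => [[i _ ->]|[-> | /imsetP[i _ ->]]].
- case: (unliftP ord0 i) => [i'|] ->; rewrite ?consf_lift ?consf0; last by left.
  by right; apply/imsetP; exists i'.
- by exists ord0 => //; rewrite consf0.
- by exists (lift ord0 i) => //; rewrite consf_lift.
Qed.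


Lemma card_im_le k (f : 'I_k -> 'I_n) : (#|[set f i | i : 'I_k]| <= k)%N.
Proof. by have := leq_imset_card f 'I_k; rewrite card_ord. Qed.

Lemma cond_cons k j (f : {ffun 'I_k -> 'I_n}) (K : {set 'I_n}) :
  j \in K -> #|K| = k.+1 ->
  (j |: [set f i | i : 'I_k] == K) = ([set f i | i : 'I_k] == K :\ j).
Proof.
move=> hj hK; apply/eqP/eqP => [hU | ->]; last by rewrite setD1K.
have hjA : j \notin [set f i | i : 'I_k].
  apply/negP => hjA; move: (@card_im_le k f); rewrite -ltnS -hK -hU cardsU1 hjA.
  by rewrite ltnn.
by rewrite -hU setU1K.
Qed.

Lemma sign_cons k j (f : {ffun 'I_k -> 'I_n}) (K : {set 'I_n}) :
  [set f i | i : 'I_k] = K :\ j -> #|K :\ j| = k ->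
  eps (fun i => nat_of_ord (consf j f i)) =
  (#|[set ab in setX [set j] (K :\ j) | (ab.2 < ab.1)%N]| + eps (fun i => nat_of_ord (f i)))%N.
Proof.
move=> hI hc /=.
rewrite consf0 (@eps_ext _ _ (fun i => nat_of_ord (f i))); last by move=> i; rewrite consf_lift.
congr (_ + _)%N.
have finj : injective f.
  move=> a b; apply: (@imset_injP _ _ f 'I_k _) => //.
  by rewrite hI hc card_ord.
rewrite -(@card_imset _ _ (fun i => (j, f i))); last by move=> a b [] /finj.
apply: eq_card => -[a b]; rewrite !inE /=.
apply/imsetP/andP => [[i]|].
  move=> + [-> ->]; rewrite inE consf_lift => hlt.
  have : f i \in K :\ j by rewrite -hI; apply/imsetP; exists i.
  by rewrite in_setD1 eqxx hlt => ->.
move=> [/and3P[/eqP-> hbj hbK] hlt].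
have : b \in K :\ j by rewrite in_setD1 hbj.
rewrite -hI => /imsetP[i _ hb].
exists i; last by rewrite hb.
by rewrite inE consf_lift -hb.
Qed.


Lemma Phi_closed (x : 'cV[R]_m) k (K : {set 'I_n}) : #|K| = k ->
  Phi k x K = \sum_(f : {ffun 'I_k -> 'I_n} | [set f i | i : 'I_k] == K)
                 (-1) ^+ eps (fun i => nat_of_ord (f i)) *: Cf f x.
Proof.
elim: k K => [|k IH] K hK.
  move/cards0_eq: hK => ->.
  pose f0 : {ffun 'I_0 -> 'I_n} := ffun0 (card_ord 0).
  rewrite (big_pred1 f0); last first.
    move=> f; rewrite /=; have -> : f = f0 by apply/ffunP => -[].
    rewrite eqxx; apply/eqP/setP => y; rewrite inE; apply/imsetP => -[i _ _].
    by have := ltn_ord i; rewrite ltn0.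
  rewrite /Phi /= /tensor_basis ffunE eqxx expr0 scale1r /Cf.
  by rewrite enum_ord0.
rewrite /Phi iterS -/(Phi k x) Atiyah_ext_val.
rewrite big_mkcond [RHS]big_mkcond sum_ffunS.
apply: eq_bigr => j _.
case: ifP => hj; last first.
  rewrite big1 // => f _; rewrite im_consf.
  case: eqP => // hU; move: hj; by rewrite -hU setU11.
have hc : #|K :\ j| = k.
  by move: hK; rewrite (cardsD1 j K) hj add1n => -[].
rewrite IH // cA_sum scaler_sumr [LHS]big_mkcond.
apply: eq_bigr => f _; rewrite im_consf cond_cons //.
case: eqP => hI //.
rewrite cA_sign scalerA Cf_S consf0 [in RHS](@Cf_ext _ _ f); last by move=> i; rewrite consf_lift.
by rewrite (@sign_cons k j f K hI hc) exprD.
Qed.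


Lemma foldr_comm (T : Type) (f : T -> 'I_n) (x : 'cV[R]_m) (r : seq T) :
  foldr (fun i y => cA (f i) y) x r =
  (-1) ^+ size r *: foldr (fun i y => comm_del_d del D (f i) y) x r.
Proof.
elim: r => [|a r IH] /=; first by rewrite scale1r.
rewrite IH cA_sign exprS mulN1r scaleNr -scalerN; congr (_ *: _).
by rewrite /cA /comm_del_d opprB.
Qed.

Lemma Phi_top (x : 'cV[R]_m) : Phi n x setT =
  \sum_(s : 'S_n) (-1) ^+ odd_perm s *:
      ((-1) ^+ n *: foldr (fun i y => comm_del_d del D (s i) y) x (enum 'I_n)).
Proof.
rewrite (@Phi_closed x n setT); last by rewrite cardsT card_ord.
rewrite (reindex (fun s : 'S_n => pval s)) /=; last first.
  exists (insubd (1%g : 'S_n)) => [s _ | f]; first exact: valKd.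
  rewrite inE => /eqP hf; apply: insubdK.
  have : {in 'I_n &, injective f}.
    by apply/imset_injP; rewrite hf cardsT.
  by move=> hinj; apply/injectiveP => a b; apply: hinj.
apply: eq_big => [s | s _] /=.
  suff -> : [set pval s i | i : 'I_n] = setT by rewrite eqxx.
  apply/setP => y; rewrite in_setT; apply/imsetP; exists (s^-1 y)%g => //.
  by rewrite pvalE permKV.
rewrite (@eps_ext _ _ (fun i => nat_of_ord (s i))); last by move=> i; rewrite pvalE.
rewrite (@Cf_ext _ _ s); last by move=> i; rewrite pvalE.
by rewrite -signr_odd eps_perm /Cf foldr_comm size_enum_ord.
Qed.


Lemma top_eq (x : 'cV[R]_m) : Atiyah_pow_top del D x =
  \sum_(s : 'S_n) (-1) ^+ odd_perm s *:
      ((-1) ^+ n *: foldr (fun i y => comm_del_d del D (s i) y) x (enum 'I_n)).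
Proof. exact: Phi_top. Qed.

End Alg.

Theorem corollary10p4
  (S R : comUnitRingType) (phi : {rmorphism S -> R}) (W : S)
  (hQ : Q_algebra S)
  (m : nat) (par : 'I_m -> bool) (D : 'M[R]_m)
  (hDodd : is_odd_mx par D) (hD2 : D *m D = (phi W)%:M)
  (n : nat) (t : 'I_n -> R)
  (hqreg : quasi_regular t) (hproj : quot_fg_projective phi t)
  (lam : 'I_n -> 'M[R]_m)
  (hlamodd : forall j, is_odd_mx par (lam j))
  (hlam : forall j, lam j *m D + D *m lam j = (t j)%:M)
  (del : 'I_n -> R -> R)
  (hconn : is_connection phi t del) (hstd : is_standard t del) :
  forall x : 'cV[R]_m, in_tX t (idem_e del D lam x - idem_formula del D lam x).
Proof.
move=> x.
have del_add : forall j r r', del j (r + r') = del j r + del j r' := hconn.1.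
suff -> : idem_e del D lam x = idem_formula del D lam x.
  by exists (fun _ => 0); rewrite subrr big1 // => j _; rewrite scaler0.
rewrite /idem_e /idem_formula (@top_eq _ _ _ del D del_add x) mulmx_sumr.
under eq_bigr => s _ do rewrite -!scalemxAr scalerA mulrC -scalerA.
rewrite -scaler_sumr scalerA; congr (_ *: _).
rewrite -mulrA; congr (_ * _).
by rewrite binS bin1 exprD -mulrA -exprD addnn -mul2n mulnC exprM sqrr_sign mulr1.
Qed.
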